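(* Let $\bm\theta_{S,t}$ and $\bm\theta_{S^i,t}$ be the parameters at step $t$ of single-layer GCNN models trained with SGD on training sets $S$ and $S^i$, which differ only in the $i$-th sample ($\mathbf{z}_i=(\mathbf{x}_i,y_i)$ in $S$ versus $\mathbf{z}_i'=(\mathbf{x}_i',y_i')$ in $S^i$). Then $$\big|\nabla_{\bm\theta}\ell(f(\mathbf{x}_i,\bm\theta_{S,t}),y_i)-\nabla_{\bm\theta}\ell(f(\mathbf{x}_i',\bm\theta_{S^i,t}),y_i')\big|\le 2\,\nu_\ell\,\alpha_\sigma\,\mathbf{g}_\lambda.$$
   Context: $g(\mathbf{L})\in\mathbb{R}^{N\times N}$ is a graph filter on a graph with $N$ nodes; for a node $\mathbf{x}$, $e_{\cdot j}=[g(\mathbf{L})]_{\mathbf{x}j}$ and $\mathcal{N}(\mathbf{x})=\{j:[g(\mathbf{L})]_{\mathbf{x}j}\neq0\}$; each node $j$ has a scalar feature $\mathbf{x}_j$. The single-layer GCNN is $f(\mathbf{x},\bm\theta)=\sigma(\sum_{j\in\mathcal{N}(\mathbf{x})}e_{\cdot j}\mathbf{x}_j\bm\theta)$ with $\bm\theta\in\mathbb{R}$, and $\mathbf{g}_\lambda:=\sup_{\mathbf{x}}|\sum_{j\in\mathcal{N}(\mathbf{x})}e_{\cdot j}\mathbf{x}_j|$. SGD with learning rate $\eta$ from a common initialization: at step $t$ a common index $i_t$ is drawn uniformly from $\{1,\dots,m\}$ and each run updates $\bm\theta_{t+1}=\bm\theta_t-\eta\nabla_{\bm\theta}\ell(f(\mathbf{x}_{i_t},\bm\theta_t),y_{i_t})$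 using its own training set's $i_t$-th sample. Activation: $|\sigma'(u)|\le\alpha_\sigma$, $|\sigma'(u)-\sigma'(v)|\le\nu_\sigma|u-v|$. Loss: $|\ell(f,y)-\ell(f',y)|\le\alpha_\ell|f-f'|$ and $|\nabla_{\bm\theta}\ell(f(\cdot),y)-\nabla_{\bm\theta}\ell(f'(\cdot),y)|\le\nu_\ell|\nabla_{\bm\theta}f(\cdot)-\nabla_{\bm\theta}f'(\cdot)|$. *)

(* Defs.v *)
From HB Require Import structures.
From mathcomp Require Import all_boot all_order all_algebra.
From mathcomp Require Import all_classical all_reals all_analysis.
Set Implicit Arguments. Unset Strict Implicit. Unset Printing Implicit Defensive.
Import Order.TTheory GRing.Theory Num.Theory.
Local Open Scope ring_scope.

Section GCNN.
Variables (R : realType) (N : nat).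

(* aggregated input at node v:  sum_{j in N(v)} [g(L)]_{vj} x_j *)
Definition agg (gL : 'M[R]_N) (feat : 'I_N -> R) (v : 'I_N) : R :=
  \sum_(j < N | gL v j != 0) gL v j * feat j.

Definition gcnn (sigma : R -> R) (gL : 'M[R]_N) (feat : 'I_N -> R)
  (v : 'I_N) (th : R) : R := sigma (agg gL feat v * th).

Definition g_lambda (gL : 'M[R]_N) (feat : 'I_N -> R) : R :=
  \big[Num.max/0]_(v < N) `|agg gL feat v|.

Definition loss_grad (loss : R -> R -> R) (sigma : R -> R) (gL : 'M[R]_N)
  (feat : 'I_N -> R) (v : 'I_N) (y : R) (th : R) : R :=
  derive1 (fun t => loss (gcnn sigma gL feat v t) y) th.

(* SGD iterates on a training set S : 'I_m -> (node, label), index sequence idx *)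
Fixpoint sgd (m : nat) (loss : R -> R -> R) (sigma : R -> R) (gL : 'M[R]_N)
  (feat : 'I_N -> R) (eta th0 : R) (idx : nat -> 'I_m)
  (S : 'I_m -> 'I_N * R) (t : nat) : R :=
  match t with
  | 0 => th0
  | t'.+1 =>
      let th := sgd loss sigma gL feat eta th0 idx S t' in
      th - eta * loss_grad loss sigma gL feat (S (idx t')).1 (S (idx t')).2 th
  end.

End GCNN.

(* Main.v *)
Require Import Defs.
From HB Require Import structures.
From mathcomp Require Import all_boot all_order all_algebra.
From mathcomp Require Import all_classical all_reals all_analysis.
Import Order.TTheory GRing.Theory Num.Theory.
Local Open Scope ring_scope.

Theorem lemma2 (R : realType) (N m : nat) (gL : 'M[R]_N) (feat : 'I_N -> R)
  (sigma : R -> R) (loss : R -> R -> R)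
  (a_sigma nu_sigma a_l nu_l eta th0 : R) (idx : nat -> 'I_m)
  (S Si : 'I_m -> 'I_N * R) (i : 'I_m) :
  (forall u : R, derivable sigma u 1) ->
  (forall u : R, `|derive1 sigma u| <= a_sigma) ->
  (forall u v : R, `|derive1 sigma u - derive1 sigma v| <= nu_sigma * `|u - v|) ->
  (forall y p : R, derivable (fun q => loss q y) p 1) ->
  (forall y p p' : R, `|loss p y - loss p' y| <= a_l * `|p - p'|) ->
  (forall (F F' : R -> R) (y th : R),
     derivable F th 1 -> derivable F' th 1 ->
     `|derive1 (fun t => loss (F t) y) th - derive1 (fun t => loss (F' t) y) th|
       <= nu_l * `|derive1 F th - derive1 F' th|) ->
  (forall k : 'I_m, k != i -> Si k = S k) ->
  forall t : nat,
  `|loss_grad loss sigma gL feat (S i).1 (S i).2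
        (sgd loss sigma gL feat eta th0 idx S t)
    - loss_grad loss sigma gL feat (Si i).1 (Si i).2
        (sgd loss sigma gL feat eta th0 idx Si t)|
  <= 2 * nu_l * a_sigma * g_lambda gL feat.
Proof.
move=> dsig asig _ _ _ hnu _ t.
set th1 := sgd _ _ _ _ _ _ _ _ _; set th2 := sgd _ _ _ _ _ _ _ _ _.
have gbound : forall v : 'I_N, `|agg gL feat v| <= g_lambda gL feat.
  move=> v; rewrite /g_lambda.
  have : v \in index_enum 'I_N by rewrite mem_index_enum.
  elim: (index_enum 'I_N) => [//|a s IH]; rewrite big_cons inE.
  case/orP=> [/eqP<-|/IH h]; rewrite le_max ?lexx //.
  by rewrite h orbT.
have dlin : forall (c : R) th, derivable (fun t : R => c * t) th 1.
  by move=> c th; apply: derivableM => //; apply: derivable_id.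
have nu0 : 0 <= nu_l.
  have := hnu id (cst 0) 0 0 (@derivable_id _ _ _ _) (derivable_cst _ _ _).
  rewrite derive1_id derive1_cst subr0 normr1 mulr1; apply: le_trans.
  exact: normr_ge0.
have one : forall (v : 'I_N) y th,
    `|loss_grad loss sigma gL feat v y th| <= nu_l * (a_sigma * g_lambda gL feat).
  move=> v y th.
  set c := agg gL feat v.
  have dF : derivable (sigma \o (fun t : R => c * t)) th 1.
    apply/derivable1_diffP; apply: differentiable_comp; apply/derivable1_diffP.
      exact: dlin.
    exact: dsig.
  have := hnu (sigma \o (fun t : R => c * t)) (cst 0) y th dF (derivable_cst _ _ _).
  rewrite derive1_cst subr0.
  have -> : (fun t => loss (cst 0 t) y) = cst (loss 0 y) by [].
  rewrite derive1_cst subr0 => h.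
  rewrite /loss_grad /gcnn -/c.
  apply: (le_trans h); apply: ler_wpM2l => //.
  rewrite derive1_comp // derive1Ml; last exact: (@derivable_id _ _ _ _).
  rewrite derive1_id mulr1 normrM; apply: ler_pM => //.
  exact: gbound.
have := ler_normB (loss_grad loss sigma gL feat (S i).1 (S i).2 th1)
   (loss_grad loss sigma gL feat (Si i).1 (Si i).2 th2).
move/le_trans; apply.
rewrite -mulrA -mulrA mulr2n mulrDl mul1r.
by apply: lerD; apply: one.
Qed.
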